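(* Consider a single group of $N^t$ treated and $N^c$ control units with binary outcomes, where $U$ treated units have outcome 1, $V=N^t-U$ treated units have outcome 0, $\eta$ control units have outcome 1 and $\nu=N^c-\eta$ control units have outcome 0, and any treated unit may be paired with any control unit. Consider all matchings consisting of exactly $M=\min(N^t,N^c)$ disjoint treated–control pairs, and maximize $\chi=(B-C-1)/\sqrt{B+C+1}$ over them. (i) If $N^c>N^t$, there is a maximizing matching in which the unmatched control units consist of exactly $\min(N^c-N^t,\eta)$ units with outcome 1 and $\max(N^c-N^t-\eta,0)$ units with outcome 0. (ii) If $N^t\ge N^c$, there is a maximizing matching in which the unmatched treated units consist of exactly $\min(N^t-N^c,V)$ units with outcome 0 and $\max(U-N^c,0)$ units with outcome 1.
   Context: For a matching (a set of disjoint treated–control pairs), $B$ is the number of pairs in which the treated unit has outcome 1 and the control unit has outcome 0, and $C$ is the number of pairs in which the treated unit has outcome 0 and the control unit has outcome 1. *)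

(* Defs.v *)
From Stdlib Require Import Reals.
From mathcomp Require Import all_boot.
Set Implicit Arguments. Unset Strict Implicit. Unset Printing Implicit Defensive.

(* Treated units are 'I_Nt, control units are 'I_Nc; outcomes are booleans
   (true = outcome 1). *)
Definition is_matching (Nt Nc : nat) (P : {set 'I_Nt * 'I_Nc}) : Prop :=
  [/\ #|P| = minn Nt Nc,
      {in P &, forall p q : 'I_Nt * 'I_Nc, p.1 = q.1 -> p = q} &
      {in P &, forall p q : 'I_Nt * 'I_Nc, p.2 = q.2 -> p = q}].

Definition Bcount (Nt Nc : nat) (yt : 'I_Nt -> bool) (yc : 'I_Nc -> bool)
  (P : {set 'I_Nt * 'I_Nc}) : nat :=
  #|[set p in P | yt p.1 && ~~ yc p.2]|.

Definition Ccount (Nt Nc : nat) (yt : 'I_Nt -> bool) (yc : 'I_Nc -> bool)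
  (P : {set 'I_Nt * 'I_Nc}) : nat :=
  #|[set p in P | ~~ yt p.1 && yc p.2]|.

Definition chi_val (B C : nat) : R :=
  Rdiv (Rminus (Rminus (INR B) (INR C)) R1) (sqrt (Rplus (Rplus (INR B) (INR C)) R1)).

Definition chi (Nt Nc : nat) (yt : 'I_Nt -> bool) (yc : 'I_Nc -> bool)
  (P : {set 'I_Nt * 'I_Nc}) : R :=
  chi_val (Bcount yt yc P) (Ccount yt yc P).

Definition unmatched_t (Nt Nc : nat) (P : {set 'I_Nt * 'I_Nc}) : {set 'I_Nt} :=
  [set i | [forall p in P, p.1 != i]].

Definition unmatched_c (Nt Nc : nat) (P : {set 'I_Nt * 'I_Nc}) : {set 'I_Nc} :=
  [set j | [forall p in P, p.2 != j]].

(* Main.v *)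
Require Import Defs.
From Stdlib Require Import Reals Lra Psatz Classical.
From mathcomp Require Import all_boot zify.
Local Open Scope R_scope.

Lemma sqr_le (x y : R) : 0 <= y -> x * x <= y * y -> x <= y.
Proof. intros Hy H. destruct (Rle_or_lt x y); auto. nra. Qed.

Lemma chi_B (B C : nat) : Rle (chi_val B C) (chi_val B.+1 C).
Proof.
unfold chi_val. rewrite (S_INR B) || rewrite (S_INR C).
assert (hb := pos_INR B). assert (hc := pos_INR C).
change R1 with 1. set b := INR B in hb |- *. set c := INR C in hc |- *.
assert (S1 := sqrt_lt_R0 (b + c + 1) ltac:(lra)).
assert (S2 := sqrt_lt_R0 (b + 1 + c + 1) ltac:(lra)).
assert (E1 := sqrt_sqrt (b + c + 1) ltac:(lra)).
assert (E2 := sqrt_sqrt (b + 1 + c + 1) ltac:(lra)).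
set s1 := sqrt (b + c + 1) in S1 E1 |- *. set s2 := sqrt (b + 1 + c + 1) in S2 E2 |- *.
assert (L : s1 <= s2). { apply sqr_le; lra. }
unfold Rdiv. apply (Rmult_le_reg_r (s1 * s2)). nra.
replace ((b - c - 1) * / s1 * (s1 * s2)) with ((b - c - 1) * s2) by (field; lra).
replace ((b + 1 - c - 1) * / s2 * (s1 * s2)) with ((b + 1 - c - 1) * s1) by (field; lra).
destruct (Rle_or_lt 0 (b - c - 1)) as [Hd|Hd].
- apply sqr_le. nra.
  replace ((b-c-1)*s2*((b-c-1)*s2)) with ((b-c-1)*(b-c-1)*(s2*s2)) by ring.
  replace ((b+1-c-1)*s1*((b+1-c-1)*s1)) with ((b-c)*(b-c)*(s1*s1)) by ring.
  rewrite E1 E2. nra.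
- destruct (Rle_or_lt 0 (b - c)). nra. nra.
Qed.

Lemma chi_C (B C : nat) : Rle (chi_val B C.+1) (chi_val B C).
Proof.
unfold chi_val. rewrite (S_INR B) || rewrite (S_INR C).
assert (hb := pos_INR B). assert (hc := pos_INR C).
change R1 with 1. set b := INR B in hb |- *. set c := INR C in hc |- *.
assert (S1 := sqrt_lt_R0 (b + c + 1) ltac:(lra)).
assert (S2 := sqrt_lt_R0 (b + (c + 1) + 1) ltac:(lra)).
assert (E1 := sqrt_sqrt (b + c + 1) ltac:(lra)).
assert (E2 := sqrt_sqrt (b + (c + 1) + 1) ltac:(lra)).
set s1 := sqrt (b + c + 1) in S1 E1 |- *. set s2 := sqrt (b + (c + 1) + 1) in S2 E2 |- *.
assert (L : s1 <= s2). { apply sqr_le; lra. }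
unfold Rdiv. apply (Rmult_le_reg_r (s1 * s2)). nra.
replace ((b - (c+1) - 1) * / s2 * (s1 * s2)) with ((b - c - 2) * s1) by (field; lra).
replace ((b - c - 1) * / s1 * (s1 * s2)) with ((b - c - 1) * s2) by (field; lra).
destruct (Rle_or_lt 0 (b - c - 1)) as [Hd|Hd].
- nra.
- assert (0 <= -(b-c-2)*s1 - (-(b-c-1))*s2); [|lra].
  assert (-(b-c-1)*s2 <= -(b-c-2)*s1); [|lra]. apply sqr_le. nra.
  replace ((-(b-c-1))*s2*((-(b-c-1))*s2)) with ((b-c-1)*(b-c-1)*(s2*s2)) by ring.
  replace ((-(b-c-2))*s1*((-(b-c-2))*s1)) with ((b-c-2)*(b-c-2)*(s1*s1)) by ring.
  rewrite E1 E2. nra.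
Qed.
Local Close Scope R_scope.

Lemma card_sum (T : finType) (A : {set T}) (f : pred T) :
  #|[set x in A | f x]| = \sum_(x in A) (f x : nat).
Proof.
rewrite -sum1_card (eq_bigl (fun x => (x \in A) && f x)); last by move=> x; rewrite in_set.
rewrite big_mkcondr /=. by apply: eq_bigr => x _; case: (f x).
Qed.

Lemma split_card (T : finType) (A : {set T}) (f : pred T) :
  #|[set x in A | f x]| + #|[set x in A | ~~ f x]| = #|A|.
Proof.
rewrite !card_sum -big_split /= -sum1_card.
by apply: eq_bigr => x _; case: (f x).
Qed.

Section S.
Variables (Nt Nc : nat).
Implicit Types P : {set 'I_Nt * 'I_Nc}.

Lemma mem_umc P j : (j \in unmatched_c P) = (j \notin [set p.2 | p in P]).
Proof.
rewrite in_set; apply/idP/idP.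
- move/forall_inP=> H; apply/imsetP => -[p Hp Ej]; move: (H p Hp); by rewrite Ej eqxx.
- move=> H; apply/forall_inP => p Hp; apply: contra H => /eqP <-; exact: imset_f.
Qed.

Lemma mem_umt P i : (i \in unmatched_t P) = (i \notin [set p.1 | p in P]).
Proof.
rewrite in_set; apply/idP/idP.
- move/forall_inP=> H; apply/imsetP => -[p Hp Ej]; move: (H p Hp); by rewrite Ej eqxx.
- move=> H; apply/forall_inP => p Hp; apply: contra H => /eqP <-; exact: imset_f.
Qed.

Lemma card_umc P : is_matching P -> #|unmatched_c P| = Nc - minn Nt Nc.
Proof.
case=> Hc _ H2.
have -> : unmatched_c P = ~: [set p.2 | p in P].
  by apply/setP => j; rewrite in_setC mem_umc.
have := cardsC [set p.2 | p in P]; rewrite card_ord (card_in_imset H2) Hc.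
move: (#|~: _|) => k; lia.
Qed.

Lemma count_ones (yc : 'I_Nc -> bool) P : is_matching P ->
  #|[set j in unmatched_c P | yc j]| + \sum_(p in P) (yc p.2 : nat) = #|[set j | yc j]|.
Proof.
case=> _ _ H2.
rewrite -(split_card _ [set j | yc j] (fun j => j \in unmatched_c P)).
congr (_ + _).
  by apply: eq_card => j; rewrite !in_set andbC.
have -> : [set x in [set j | yc j] | x \notin unmatched_c P]
         = [set p.2 | p in [set p in P | yc p.2]].
  apply/setP => j; rewrite {1}in_set mem_umc negbK !in_set.
  apply/andP/imsetP.
  - case=> Hy /imsetP [p Hp Ej]; subst j; exists p => //; by rewrite in_set Hp Hy.
  - case=> p; rewrite in_set => /andP [Hp Hy] ->; split => //; exact: imset_f.
rewrite card_in_imset ?card_sum //.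
move=> p q; rewrite !in_set => /andP [Hp _] /andP [Hq _]; exact: H2.
Qed.


Lemma swap_lemma (yt : 'I_Nt -> bool) (yc : 'I_Nc -> bool) P i j1 j0 :
  is_matching P -> (i, j1) \in P -> yc j1 -> j0 \in unmatched_c P -> ~~ yc j0 ->
  let P' := (i, j0) |: (P :\ (i, j1)) in
  [/\ is_matching P', Rle (chi yt yc P) (chi yt yc P') &
      \sum_(p in P') (yc p.2 : nat) < \sum_(p in P) (yc p.2 : nat)].
Proof.
move=> [Hc H1 H2] Hp1 Hy1 Hu0 Hy0 P'.
have n0 : (i, j0) \notin P.
  move: (Hu0); rewrite mem_umc; apply: contra => H.
  exact: (imset_f (fun p : 'I_Nt * 'I_Nc => p.2) H).
have n0' : (i, j0) \notin P :\ (i, j1) by rewrite in_setD1 (negbTE n0) andbF.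
have SUM : forall F : 'I_Nt * 'I_Nc -> nat,
   \sum_(p in P) F p = F (i, j1) + \sum_(p in P :\ (i, j1)) F p.
  by move=> F; rewrite (big_setD1 (i, j1)).
have SUM' : forall F : 'I_Nt * 'I_Nc -> nat,
   \sum_(p in P') F p = F (i, j0) + \sum_(p in P :\ (i, j1)) F p.
  by move=> F; rewrite /P' big_setU1.
split.
- split.
  + by rewrite /P' cardsU1 n0' -Hc (cardsD1 (i, j1) P) Hp1.
  + move=> p q; rewrite /P' !in_setU1 !in_setD1.
    move=> /predU1P [-> | /andP [np Hp]] /predU1P [-> | /andP [nq Hq]] //= E.
    * exfalso; move/eqP: nq; apply; symmetry; apply: H1 => //.
    * exfalso; move/eqP: np; apply; apply: H1 => //.
    * exact: H1.
  + move=> p q; rewrite /P' !in_setU1 !in_setD1.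
    move=> /predU1P [-> | /andP [np Hp]] /predU1P [-> | /andP [nq Hq]] //= E.
    * exfalso; move: Hu0; rewrite mem_umc E; move/negP; apply.
      exact: (imset_f (fun p : 'I_Nt * 'I_Nc => p.2) Hq).
    * exfalso; move: Hu0; rewrite mem_umc -E; move/negP; apply.
      exact: (imset_f (fun p : 'I_Nt * 'I_Nc => p.2) Hp).
    * exact: H2.
- rewrite /chi /Bcount /Ccount !card_sum !SUM !SUM' /= Hy1 (negbTE Hy0) /=.
  case: (yt i) => /=; rewrite ?add0n ?add1n.
    + exact: chi_B.
  + exact: chi_C.
- by rewrite SUM SUM' /= Hy1 (negbTE Hy0).
Qed.
End S.

Lemma list_max (T : eqType) (Pr : T -> Prop) (f : T -> R) (s : seq T) :
  (exists x, x \in s /\ Pr x) ->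
  exists x, [/\ x \in s, Pr x & forall y, y \in s -> Pr y -> Rle (f y) (f x)].
Proof.
elim: s => [|a s IH]; first by case=> x [].
case=> x [Hx Px].
destruct (classic (exists x, x \in s /\ Pr x)) as [E|NE].
- case: (IH E) => z [Hz Pz Mz].
  destruct (classic (Pr a)) as [Pa|nPa].
  + destruct (Rle_or_lt (f a) (f z)) as [L|L].
    * exists z; split; first by rewrite in_cons Hz orbT.
        done.
      move=> y; rewrite in_cons => /predU1P [->|Hy] Py; [done|exact: Mz].
    * exists a; split; first by rewrite in_cons eqxx.
        done.
      move=> y; rewrite in_cons => /predU1P [->|Hy] Py; first by apply: Rle_refl.
      apply: Rle_trans (Mz y Hy Py) _; lra.
  + exists z; split; first by rewrite in_cons Hz orbT.
      done.
    move=> y; rewrite in_cons => /predU1P [->|Hy] Py; [done|exact: Mz].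
- have Pa : Pr a.
    move: Hx; rewrite in_cons => /predU1P [<-|Hx] //.
    by exfalso; apply: NE; exists x.
  exists a; split; first by rewrite in_cons eqxx.
    done.
  move=> y; rewrite in_cons => /predU1P [->|Hy] Py; first by apply: Rle_refl.
  by exfalso; apply: NE; exists y.
Qed.

Lemma exists_matching Nt Nc : exists P : {set 'I_Nt * 'I_Nc}, is_matching P.
Proof.
pose w (k : 'I_(minn Nt Nc)) :=
  (widen_ord (geq_minl Nt Nc) k, widen_ord (geq_minr Nt Nc) k).
exists [set w k | k in 'I_(minn Nt Nc)]; split.
- rewrite card_imset ?card_ord //.
  by move=> k l [E _]; apply: ord_inj.
- move=> p q /imsetP [k _ ->] /imsetP [l _ ->] /= E.
  by have -> : k = l by apply: ord_inj; exact: (congr1 val E).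
- move=> p q /imsetP [k _ ->] /imsetP [l _ ->] /= E.
  by have -> : k = l by apply: ord_inj; exact: (congr1 val E).
Qed.

Lemma mainL Nt Nc (yt : 'I_Nt -> bool) (yc : 'I_Nc -> bool) :
  Nt <= Nc ->
  exists P : {set 'I_Nt * 'I_Nc},
     [/\ is_matching P,
         (forall Q, is_matching Q -> Rle (chi yt yc Q) (chi yt yc P)),
         #|[set j in unmatched_c P | yc j]| = minn (Nc - Nt) #|[set j | yc j]| &
         #|[set j in unmatched_c P | ~~ yc j]| = maxn (Nc - Nt - #|[set j | yc j]|) 0].
Proof.
move=> le.
have [P0 HP0] := exists_matching Nt Nc.
have [P1 [_ HP1 M1]] := @list_max _ _ (chi yt yc) _ (ex_intro _ P0 (conj (mem_enum _ P0) HP0)).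
pose Mx P := is_matching P /\ forall Q, is_matching Q -> Rle (chi yt yc Q) (chi yt yc P).
have MP1 : Mx P1 by split => // Q HQ; apply: M1 => //; rewrite mem_enum.
pose m (P : {set 'I_Nt * 'I_Nc}) := \sum_(p in P) (yc p.2 : nat).
have [P [_ [HP MP] M2]] := @list_max _ Mx (fun P => Ropp (INR (m P))) _
     (ex_intro _ P1 (conj (mem_enum _ P1) MP1)).
have Huc := @card_umc _ _ P HP.
have Hsp := split_card _ (unmatched_c P) yc.
have Hco := @count_ones _ _ yc P HP.
have alt : m P = 0 \/ #|[set j in unmatched_c P | ~~ yc j]| = 0.
  case: (posnP (m P)) => [->|mpos]; first by left.
  case: (posnP #|[set j in unmatched_c P | ~~ yc j]|) => [->|zpos]; first by right.
  exfalso.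
  case/card_gt0P: zpos => j0; rewrite in_set => /andP [Hu0 Hy0].
  case: (boolP [exists p in P, yc p.2]) => [/exists_inP [[i j1] Hp Hy1] | /exists_inPn H].
  - have [HP' Hchi Hlt] := @swap_lemma _ _ yt yc P i j1 j0 HP Hp Hy1 Hu0 Hy0.
    set P' := _ |: _ in HP' Hchi Hlt.
    have MP' : Mx P'.
      split => // Q HQ; apply: Rle_trans (MP Q HQ) Hchi.
    have := M2 P' (mem_enum _ P') MP'.
    have : Rlt (INR (m P')) (INR (m P)) by apply: lt_INR; apply/ltP.
    lra.
  - move: mpos; rewrite /m big1 // => p Hp; by rewrite (negbTE (H p Hp)).
exists P; split => //; move: Huc Hsp Hco alt; rewrite /m;
move: (#|unmatched_c P|) (#|[set j in unmatched_c P | yc j]|)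
      (#|[set j in unmatched_c P | ~~ yc j]|) (#|[set j | yc j]|) (\sum_(p in P) _) => a b c d e;
(have : minn Nt Nc = Nt by apply/minn_idPl); lia.
Qed.

Definition tr {Nt Nc : nat} (P : {set 'I_Nt * 'I_Nc}) : {set 'I_Nc * 'I_Nt} :=
  [set (p.2, p.1) | p in P].

Lemma sw_inj {Nt Nc : nat} : injective (fun p : 'I_Nt * 'I_Nc => (p.2, p.1)).
Proof. by move=> [a b] [c d] [-> ->]. Qed.

Lemma mem_tr {Nt Nc : nat} (P : {set 'I_Nt * 'I_Nc}) x : (x \in tr P) = ((x.2, x.1) \in P).
Proof.
apply/imsetP/idP.
- by case=> p Hp ->; case: p Hp.
- move=> H; exists (x.2, x.1) => //; by case: x H.
Qed.

Lemma tr_tr {Nt Nc : nat} (P : {set 'I_Nt * 'I_Nc}) : tr (tr P) = P.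
Proof. by apply/setP => x; rewrite mem_tr mem_tr; case: x. Qed.

Lemma match_tr {Nt Nc : nat} (P : {set 'I_Nt * 'I_Nc}) : is_matching P -> is_matching (tr P).
Proof.
case=> Hc H1 H2; split.
- rewrite card_imset; [by rewrite Hc minnC | exact: sw_inj].
- move=> p q; rewrite (mem_tr P p) (mem_tr P q) => Hp Hq E.
  have := H2 _ _ Hp Hq E; case: p {Hp E} => a b; case: q {Hq} => c d /=. by case=> -> ->.
- move=> p q; rewrite (mem_tr P p) (mem_tr P q) => Hp Hq E.
  have := H1 _ _ Hp Hq E; case: p {Hp E} => a b; case: q {Hq} => c d /=. by case=> -> ->.
Qed.

Lemma chi_tr {Nt Nc : nat} (yt : 'I_Nt -> bool) (yc : 'I_Nc -> bool) (P : {set 'I_Nt * 'I_Nc}) :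
  chi (fun j => ~~ yc j) (fun i => ~~ yt i) (tr P) = chi yt yc P.
Proof.
rewrite /chi /Bcount /Ccount !card_sum /tr !big_imset /=; last 2 first.
  by move=> x y _ _; apply: sw_inj.
  by move=> x y _ _; apply: sw_inj.
congr chi_val; apply: eq_bigr => p _; by rewrite negbK andbC.
Qed.

Lemma umc_tr {Nt Nc : nat} (P : {set 'I_Nt * 'I_Nc}) : unmatched_c (tr P) = unmatched_t P.
Proof.
apply/setP => i; rewrite !in_set; apply/forall_inP/forall_inP.
- move=> H p Hp; have := H (p.2, p.1); rewrite mem_tr; case: p Hp => a b Hp; exact.
- move=> H p; rewrite mem_tr => Hp; exact: (H _ Hp).
Qed.

Theorem claim1 (Nt Nc : nat) (yt : 'I_Nt -> bool) (yc : 'I_Nc -> bool) :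
  let U := #|[set i | yt i]| in
  let V := Nt - U in
  let eta := #|[set j | yc j]| in
  (Nt < Nc ->
   exists P : {set 'I_Nt * 'I_Nc},
     [/\ is_matching P,
         (forall Q, is_matching Q -> Rle (chi yt yc Q) (chi yt yc P)),
         #|[set j in unmatched_c P | yc j]| = minn (Nc - Nt) eta &
         #|[set j in unmatched_c P | ~~ yc j]| = maxn (Nc - Nt - eta) 0]) /\
  (Nc <= Nt ->
   exists P : {set 'I_Nt * 'I_Nc},
     [/\ is_matching P,
         (forall Q, is_matching Q -> Rle (chi yt yc Q) (chi yt yc P)),
         #|[set i in unmatched_t P | ~~ yt i]| = minn (Nt - Nc) V &
         #|[set i in unmatched_t P | yt i]| = maxn (U - Nc) 0]).
Proof.
move=> U V eta; split.
  by move=> lt; apply: mainL; apply: ltnW.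
move=> le.
have Hcard : #|[set i | ~~ yt i]| = Nt - U.
  have := cardsC [set i | yt i]; rewrite card_ord.
  have -> : ~: [set i | yt i] = [set i | ~~ yt i] by apply/setP => i; rewrite !in_set.
  rewrite /U; move: (#|_|) (#|_|) => a b; lia.
have [P' [HP' MP' E1 E2]] := @mainL _ _ (fun j => ~~ yc j) (fun i => ~~ yt i) le.
exists (tr P'); split.
- exact: match_tr.
- move=> Q HQ; rewrite -(chi_tr yt yc Q) -(chi_tr yt yc (tr P')) tr_tr.
  apply: MP'; exact: match_tr.
- by rewrite -umc_tr tr_tr E1 /V Hcard.
- rewrite -umc_tr tr_tr.
  have -> : [set i in unmatched_c P' | yt i] = [set j in unmatched_c P' | ~~ ~~ yt j].
    by apply/setP => j; rewrite !in_set negbK.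
  rewrite E2 Hcard.
  have : #|[set i | yt i]| <= Nt by apply: leq_trans (max_card _) _; rewrite card_ord.
  rewrite /U; move: (#|[set i | yt i]|) => u; lia.
Qed.
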